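(* Let $(\mathcal{E},\mathcal{L},\mathcal{B})$ be a weakly left resolving labelled space whose accommodating family $\mathcal{B}$ is closed under relative complements, let $S$ be its associated inverse semigroup, and let $\xi$ be a filter in $E(S)$ with word $\alpha\in\mathcal{L}^{\le\infty}$. If $\xi_n$ is an ultrafilter in $\mathcal{B}_{\alpha_{1,n}}$ for some $n$ with $0<n\le|\alpha|$, then $\xi_m$ is an ultrafilter in $\mathcal{B}_{\alpha_{1,m}}$ for every $0<m<n$; if moreover $\xi_0\neq\emptyset$, then $\xi_0$ is an ultrafilter in $\mathcal{B}$.
   Context: A directed graph $\mathcal{E}=(\mathcal{E}^0,\mathcal{E}^1,r,s)$ has countable nonempty vertex set, edge set, range/source maps; paths satisfy $r(\lambda_i)=s(\lambda_{i+1})$. A labelled graph has a surjective labelling $\mathcal{L}:\mathcal{E}^1\to\mathcal{A}$ extended letterwise to finite and infinite paths. $\omega$ is the empty word, $\mathcal{L}^+=\bigcup_{n\ge1}\mathcal{L}(\mathcal{E}^n)$, $\mathcal{L}^*=\{\omega\}\cup\mathcal{L}^+$, $\mathcal{L}^\infty$ the labels of infinite paths, $\mathcal{L}^{\le\infty}=\mathcal{L}^*\cup\mathcal{L}^\infty$; $\alpha_{i,j}=\alpha_i\cdots\alpha_j$, $\alpha_{1,0}=\omega$. For $A\subseteq\mathcal{E}^0$, $\alpha\in\mathcal{L}^+$: $r(A,\alpha)=\{r(\lambda):\mathcal{L}(\lambda)=\alpha,\ s(\lambda)\in A\}$, $r(A,\omega)=A$, $r(\alpha)=r(\mathcal{E}^0,\alpha)$.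 $\mathcal{B}$ accommodating: closed under $r(\cdot,\alpha)$, finite intersections and unions, contains $r(\alpha)$ for $\alpha\in\mathcal{L}^+$; labelled space weakly left resolving if $r(A\cap B,\alpha)=r(A,\alpha)\cap r(B,\alpha)$ for $A,B\in\mathcal{B}$, $\alpha\in\mathcal{L}^+$. $\mathcal{B}_\alpha=\mathcal{B}\cap\mathcal{P}(r(\alpha))$, $\mathcal{B}_\omega=\mathcal{B}$. $S$ = triples $(\alpha,A,\beta)$, $\alpha,\beta\in\mathcal{L}^*$, $\emptyset\ne A\in\mathcal{B}_\alpha\cap\mathcal{B}_\beta$, plus $0$; product $(\alpha,A,\beta)(\gamma,B,\delta)=(\alpha\gamma',r(A,\gamma')\cap B,\delta)$ if $\gamma=\beta\gamma'$, $=(\alpha,A\cap r(B,\beta'),\delta\beta')$ if $\beta=\gamma\beta'$, $=0$ otherwise (empty middle entry identified with $0$). $E(S)=\{(\alpha,A,\alpha)\}\cup\{0\}$ with $p\le q$ iff $pq=p$. A filter in a poset with least element $0$ is a nonempty upward-closed subset not containing $0$ in which any two elements have a common lower bound in it; an ultrafilter is a maximal filter; filters in $\mathcal{B}_\alpha$ are under inclusion. The words of elements of a filter $\xi$ in $E(S)$ are pairwise comparable; the word of $\xi$ is the longest one if it exists ($\alpha\in\mathcal{L}^*$), and otherwise the unique $\alpha\in\mathcal{L}^\infty$ such that all elements of $\xi$ are of the form $(\alpha_{1,n},A,\alpha_{1,n})$. For $0\le n\le|\alpha|$ ($n$ finite), $\xi_n=\{A\in\mathcal{B}:(\alpha_{1,n},A,\alpha_{1,n})\in\xi\}$.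 *)

(* Defs.v *)
From Stdlib Require Import List Arith Classical ClassicalEpsilon.
Import ListNotations.
Set Implicit Arguments.

Section LabelledSpace.
Variables (V Ed A : Type) (r s : Ed -> V) (lab : Ed -> A).

Definition vset := V -> Prop.

Definition countable (T : Type) : Prop := exists f : T -> nat, forall x y, f x = f y -> x = y.

(* finite paths: nonempty lists of edges with r(e_i) = s(e_{i+1}) *)
Fixpoint consec (e : Ed) (l : list Ed) : Prop :=
  match l with
  | [] => True
  | e' :: l' => r e = s e' /\ consec e' l'
  end.

Definition in_Lplus (al : list A) : Prop :=
  exists e l, consec e l /\ map lab (e :: l) = al.
Definition in_Lstar (al : list A) : Prop := al = [] \/ in_Lplus al.
Definition in_Linf (al : nat -> A) : Prop :=
  exists p : nat -> Ed, (forall i, r (p i) = s (p (S i))) /\ (forall i, lab (p i) = al i).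

Inductive lword := Fin (al : list A) | Inf (al : nat -> A).

Definition in_Lle_inf (w : lword) : Prop :=
  match w with Fin al => in_Lstar al | Inf al => in_Linf al end.

Definition le_len (n : nat) (w : lword) : Prop :=
  match w with Fin al => n <= length al | Inf _ => True end.

Definition wpre (w : lword) (n : nat) : list A :=
  match w with Fin al => firstn n al | Inf al => map al (seq 0 n) end.

Definition rng (X : vset) (al : list A) : vset :=
  match al with
  | [] => X
  | _ => fun v => exists e l, consec e l /\ map lab (e :: l) = al /\
                   X (s e) /\ r (last l e) = v
  end.

Definition rall (al : list A) : vset := rng (fun _ => True) al.

Definition vsub (X Y : vset) : Prop := forall v, X v -> Y v.
Definition vnonempty (X : vset) : Prop := exists v, X v.

Variable B : vset -> Prop.

Definition accommodating : Prop :=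
  (forall X al, B X -> in_Lstar al -> B (rng X al)) /\
  (forall X Y, B X -> B Y -> B (fun v => X v /\ Y v)) /\
  (forall X Y, B X -> B Y -> B (fun v => X v \/ Y v)) /\
  (forall al, in_Lplus al -> B (rall al)).

Definition weakly_left_resolving : Prop :=
  forall X Y al, B X -> B Y -> in_Lplus al ->
    forall v, rng (fun u => X u /\ Y u) al v <-> (rng X al v /\ rng Y al v).

Definition closed_rel_compl : Prop :=
  forall X Y, B X -> B Y -> B (fun v => X v /\ ~ Y v).

Definition Bw (al : list A) (X : vset) : Prop := B X /\ vsub X (rall al).

(* elements of S: None = 0, Some (al, X, be) = (al, X, be) *)
Definition Selt := option (list A * vset * list A).

Definition inS (p : Selt) : Prop :=
  match p with
  | None => True
  | Some (al, X, be) => in_Lstar al /\ in_Lstar be /\ vnonempty X /\ Bw al X /\ Bw be X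
  end.

Definition is_prefix (be ga : list A) : Prop := firstn (length be) ga = be.

(* triple with empty middle entry identified with 0 *)
Definition mk (al : list A) (X : vset) (be : list A) : Selt :=
  if excluded_middle_informative (vnonempty X) then Some (al, X, be) else None.

Definition Smul (p q : Selt) : Selt :=
  match p, q with
  | Some (al, X, be), Some (ga, Y, de) =>
      if excluded_middle_informative (is_prefix be ga) then
        let ga' := skipn (length be) ga in
        mk (al ++ ga') (fun v => rng X ga' v /\ Y v) de
      else if excluded_middle_informative (is_prefix ga be) then
        let be' := skipn (length ga) be in
        mk al (fun v => X v /\ rng Y be' v) (de ++ be')
      else None
  | _, _ => None
  end.

Definition inES (p : Selt) : Prop :=
  inS p /\ match p with None => True | Some (al, _, be) => al = be end.

Definition ESle (p q : Selt) : Prop := Smul p q = p.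

Definition ES_filter (xi : Selt -> Prop) : Prop :=
  (forall p, xi p -> inES p) /\
  (exists p, xi p) /\
  (forall p q, xi p -> inES q -> ESle p q -> xi q) /\
  ~ xi None /\
  (forall p q, xi p -> xi q -> exists t, xi t /\ ESle t p /\ ESle t q).

Definition filter_word (xi : Selt -> Prop) (w : lword) : Prop :=
  match w with
  | Fin al => (exists X, xi (Some (al, X, al))) /\
              (forall be X ga, xi (Some (be, X, ga)) -> length be <= length al)
  | Inf al => (forall be X ga, xi (Some (be, X, ga)) ->
                  be = ga /\ be = map al (seq 0 (length be))) /\
              (forall be X ga, xi (Some (be, X, ga)) ->
                  exists be' Y ga', xi (Some (be', Y, ga')) /\ length be < length be')
  end.

Definition xi_n (xi : Selt -> Prop) (w : lword) (n : nat) : vset -> Prop :=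
  fun X => B X /\ xi (Some (wpre w n, X, wpre w n)).

(* filters and ultrafilters in the poset (P, inclusion) with least element the empty set *)
Definition set_filter (P : vset -> Prop) (F : vset -> Prop) : Prop :=
  (forall X, F X -> P X) /\
  (exists X, F X) /\
  (forall X Y, F X -> P Y -> vsub X Y -> F Y) /\
  (forall X, F X -> vnonempty X) /\
  (forall X Y, F X -> F Y -> exists Z, F Z /\ vsub Z X /\ vsub Z Y).

Definition set_ultrafilter (P : vset -> Prop) (F : vset -> Prop) : Prop :=
  set_filter P F /\
  (forall G, set_filter P G -> (forall X, F X -> G X) -> forall X, G X -> F X).

End LabelledSpace.

(* Main.v *)
Require Import Defs.
From Stdlib Require Import List Arith Lia Classical ClassicalEpsilon FunctionalExtensionality PropExtensionality.
Import ListNotations.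


Lemma skipn_len_app {T} (a d : list T) : skipn (length a) (a ++ d) = d.
Proof. induction a; simpl; auto. Qed.
Lemma firstn_len_app {T} (a d : list T) : firstn (length a) (a ++ d) = a.
Proof. induction a; simpl; f_equal; auto. Qed.

Section P.
Variables (V Ed A : Type) (r s : Ed -> V) (lab : Ed -> A).

Lemma vext (X Y : vset V) : (forall v, X v <-> Y v) -> X = Y.
Proof. intros H; apply functional_extensionality; intros v; apply propositional_extensionality; auto. Qed.

Lemma last_cons_d (l : list Ed) : forall (x d : Ed), last (x :: l) d = last l x.
Proof. induction l as [|y l IH]; intros x d; [reflexivity|].
  change (last (y :: l) d = last (y :: l) x). rewrite !IH. reflexivity. Qed.

Lemma last_app_c (l1 : list Ed) : forall e e2 l2, last (l1 ++ e2 :: l2) e = last l2 e2.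
Proof. induction l1 as [|y l1 IH]; intros e e2 l2; simpl app.
  - apply last_cons_d.
  - rewrite last_cons_d. apply IH. Qed.

Lemma consec_app (l1 : list Ed) : forall e e2 l2,
  consec r s e (l1 ++ e2 :: l2) <-> consec r s e l1 /\ r (last l1 e) = s e2 /\ consec r s e2 l2.
Proof. induction l1 as [|y l1 IH]; intros e e2 l2; simpl app.
  - simpl. tauto.
  - change (r e = s y /\ consec r s y (l1 ++ e2 :: l2) <-> (r e = s y /\ consec r s y l1) /\ r (last (y :: l1) e) = s e2 /\ consec r s e2 l2).
    rewrite last_cons_d, IH. tauto. Qed.

Lemma path_split (l : list Ed) : forall e (x y : list A), consec r s e l -> map lab (e::l) = x ++ y ->
  x <> [] -> y <> [] -> exists l1 e2 l2, l = l1 ++ e2 :: l2 /\ map lab (e::l1) = x /\ map lab (e2::l2) = y.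
Proof. induction l as [|e' l IH]; intros e x y Hc Hm Hx Hy.
  - destruct x as [|x1 xs]; [congruence|]. simpl in Hm. injection Hm; intros H1 H2.
    destruct xs; destruct y; simpl in H1; congruence.
  - destruct x as [|x1 xs]; [congruence|]. simpl in Hm. injection Hm; intros H1 H2.
    destruct xs as [|x2 xs].
    + exists [], e', l. simpl in *. subst. auto.
    + destruct Hc as [_ Hc]. destruct (IH e' (x2::xs) y Hc) as (l1 & e2 & l2 & E1 & E2 & E3); auto; try congruence; try (simpl; congruence).
      exists (e'::l1), e2, l2. subst l. split; auto. simpl in *. rewrite H2, E2. auto. Qed.

Lemma Lstar_app (x y : list A) : in_Lstar r s lab (x ++ y) -> in_Lstar r s lab x /\ in_Lstar r s lab y.
Proof. intros H. destruct x as [|x1 xs]. { split; [left; auto| exact H]. }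
  destruct y as [|y1 ys]. { rewrite app_nil_r in H. split; [exact H| left; auto]. }
  destruct H as [H|(e & l & Hc & Hm)]. { discriminate. }
  destruct (path_split l e (x1::xs) (y1::ys) Hc Hm) as (l1 & e2 & l2 & E1 & E2 & E3); try discriminate.
  subst l. apply consec_app in Hc. destruct Hc as (H1 & H2 & H3).
  split; right; [exists e, l1 | exists e2, l2]; auto. Qed.

Lemma rng_app (X : vset V) (x y : list A) v : rng r s lab X (x ++ y) v <-> rng r s lab (rng r s lab X x) y v.
Proof. destruct x as [|x1 xs]. { simpl. tauto. }
  destruct y as [|y1 ys]. { rewrite app_nil_r. simpl. tauto. }
  change (rng r s lab X (x1 :: xs ++ y1 :: ys) v) with
    (exists e l, consec r s e l /\ map lab (e :: l) = x1 :: xs ++ y1 :: ys /\ X (s e) /\ r (last l e) = v).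
  change (rng r s lab (rng r s lab X (x1 :: xs)) (y1 :: ys) v) with
    (exists e l, consec r s e l /\ map lab (e :: l) = y1 :: ys /\
       (exists e' l', consec r s e' l' /\ map lab (e' :: l') = x1 :: xs /\ X (s e') /\ r (last l' e') = s e)
       /\ r (last l e) = v).
  split.
  - intros (e & l & Hc & Hm & HX & Hv).
    destruct (path_split l e (x1::xs) (y1::ys) Hc Hm) as (l1 & e2 & l2 & E1 & E2 & E3); try discriminate.
    subst l. apply consec_app in Hc. destruct Hc as (H1 & H2 & H3).
    exists e2, l2. rewrite last_app_c in Hv. repeat split; auto.
    exists e, l1. auto.
  - intros (e2 & l2 & H3 & E3 & (e & l1 & H1 & E2 & HX & H2) & Hv).
    exists e, (l1 ++ e2 :: l2). rewrite consec_app, last_app_c. repeat split; auto.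
    change (lab e :: map lab (l1 ++ e2 :: l2) = x1 :: xs ++ y1 :: ys).
    rewrite map_app. simpl in E2. injection E2; intros -> ->. rewrite E3. reflexivity. Qed.

Lemma rng_mono (X Y : vset V) al : vsub X Y -> vsub (rng r s lab X al) (rng r s lab Y al).
Proof. intros H v. destruct al as [|a al]; simpl; auto.
  intros (e & l & H1 & H2 & H3 & H4). exists e, l. auto. Qed.

Lemma rng_src (X : vset V) al v : rng r s lab X al v -> vnonempty X.
Proof. destruct al as [|a al]; simpl. { intros; exists v; auto. }
  intros (e & l & H1 & H2 & H3 & H4). exists (s e). auto. Qed.

Lemma mk_some (al be : list A) (X : vset V) : vnonempty X -> mk al X be = Some (al, X, be).
Proof. intros H; unfold mk. destruct (excluded_middle_informative (vnonempty X)); tauto. Qed.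

Lemma mk_eq (al be al' be' : list A) (X X' : vset V) : mk al X be = Some (al', X', be') -> al = al' /\ X = X' /\ be = be'.
Proof. unfold mk. destruct (excluded_middle_informative (vnonempty X)); intros H; [|discriminate].
  injection H; auto. Qed.

Lemma smul_ext (a d : list A) (C Y : vset V) :
  Smul r s lab (Some (a ++ d, C, a ++ d)) (Some (a, Y, a)) = mk (a ++ d) (fun v => C v /\ rng r s lab Y d v) (a ++ d).
Proof. unfold Smul. destruct (excluded_middle_informative (is_prefix (a ++ d) a)) as [Hp|Hp].
  - assert (d = []) as ->.
    { unfold is_prefix in Hp. apply (f_equal (@length A)) in Hp. rewrite length_firstn, length_app in Hp.
      destruct d; auto. simpl in Hp. lia. }
    rewrite !app_nil_r, skipn_all, app_nil_r. reflexivity.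
  - destruct (excluded_middle_informative (is_prefix a (a ++ d))) as [Hq|Hq].
    + rewrite skipn_len_app. reflexivity.
    + exfalso; apply Hq. apply firstn_len_app. Qed.

Lemma le_of_sub (a d : list A) (C Y : vset V) : vnonempty C -> vsub C (rng r s lab Y d) ->
  ESle r s lab (Some (a ++ d, C, a ++ d)) (Some (a, Y, a)).
Proof. intros Hn Hs. unfold ESle. rewrite smul_ext.
  replace (fun v => C v /\ rng r s lab Y d v) with C. { apply mk_some; auto. }
  apply vext. intros v. split; [intros H; split; auto | tauto]. Qed.

Lemma le_of_sub0 (a : list A) (C Y : vset V) : vnonempty C -> vsub C Y ->
  ESle r s lab (Some (a, C, a)) (Some (a, Y, a)).
Proof. intros Hn Hs. pose proof (le_of_sub a [] C Y Hn Hs) as K. rewrite app_nil_r in K. exact K. Qed.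

Lemma shape (g a : list A) (C Y : vset V) : ESle r s lab (Some (g, C, g)) (Some (a, Y, a)) ->
  exists d, g = a ++ d /\ vsub C (rng r s lab Y d).
Proof. unfold ESle, Smul. intros H.
  destruct (excluded_middle_informative (is_prefix g a)) as [Hp|Hp].
  - apply mk_eq in H. destruct H as (_ & Hm & Ha). subst g. exists []. rewrite app_nil_r. split; auto.
    rewrite skipn_all in Hm. intros v Hv. rewrite <- Hm in Hv. simpl in *. tauto.
  - destruct (excluded_middle_informative (is_prefix a g)) as [Hq|Hq]; [|discriminate].
    apply mk_eq in H. destruct H as (_ & Hm & Ha). exists (skipn (length a) g). split; auto.
    intros v Hv. rewrite <- Hm in Hv. tauto. Qed.

End P.

Section Q.
Variables (V Ed A : Type) (r s : Ed -> V) (lab : Ed -> A) (B : vset V -> Prop).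

Lemma ultra_D1 (P F : vset V -> Prop) : set_ultrafilter P F ->
  (forall X Y, P X -> P Y -> P (fun v => X v /\ Y v)) ->
  forall A0, P A0 -> ~ F A0 -> exists C, F C /\ forall v, A0 v -> C v -> False.
Proof. intros [[Hs [Hex [Hup [Hne Hlb]]]] Hmax] Hcap A0 HP HF.
  apply NNPP; intros Hno.
  set (G := fun Y => P Y /\ exists C, F C /\ forall v, A0 v -> C v -> Y v).
  assert (Hmeet : forall C, F C -> vnonempty (fun v => A0 v /\ C v)).
  { intros C HC. apply NNPP; intros Hn. apply Hno. exists C. split; auto.
    intros v H1 H2. apply Hn. exists v. auto. }
  assert (HG : set_filter P G).
  { split; [|split; [|split; [|split]]].
    - intros X [H _]; auto.
    - destruct Hex as [C0 HC0]. exists (fun v => A0 v /\ C0 v). split; [apply Hcap; auto|].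
      exists C0. split; auto.
    - intros X Y [_ (C & HC & HCs)] HY Hxy. split; auto. exists C. split; auto.
    - intros X [_ (C & HC & HCs)]. destruct (Hmeet C HC) as [v [H1 H2]]. exists v. auto.
    - intros X Y [HX (C1 & HC1 & H1)] [HY (C2 & HC2 & H2)].
      destruct (Hlb C1 C2 HC1 HC2) as (C3 & HC3 & S1 & S2).
      exists (fun v => A0 v /\ C3 v). repeat split.
      + apply Hcap; auto.
      + exists C3. split; auto.
      + intros v [Ha Hc]. apply H1; auto.
      + intros v [Ha Hc]. apply H2; auto. }
  apply HF. apply (Hmax G HG).
  - intros X HX. split; auto. exists X. split; auto.
  - split; auto. destruct Hex as [C0 HC0]. exists C0. split; auto. Qed.

Lemma ultra_D2 (P F : vset V -> Prop) : set_filter P F ->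
  (forall A0, P A0 -> ~ F A0 -> exists C, F C /\ forall v, A0 v -> C v -> False) ->
  set_ultrafilter P F.
Proof. intros HF Hd. split; auto. intros G HG Hsub X HX.
  destruct HG as [Gs [_ [_ [Gne Glb]]]].
  apply NNPP; intros Hn. destruct (Hd X (Gs X HX) Hn) as (C & HC & Hdis).
  destruct (Glb X C HX (Hsub C HC)) as (Z & HZ & S1 & S2).
  destruct (Gne Z HZ) as [v Hv]. apply (Hdis v); auto. Qed.

Lemma ultra_ext (P Q F : vset V -> Prop) : (forall X, P X <-> Q X) -> set_ultrafilter P F -> set_ultrafilter Q F.
Proof. intros H. replace Q with P; auto. apply functional_extensionality; intros X.
  apply propositional_extensionality; auto. Qed.

Hypotheses (hacc : accommodating r s lab B) (hwlr : weakly_left_resolving r s lab B)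
  (hcompl : closed_rel_compl B).
Variable xi : Selt V A -> Prop.
Hypothesis hxi : ES_filter r s lab B xi.

Lemma inES_some al X be : xi (Some (al, X, be)) ->
  al = be /\ in_Lstar r s lab al /\ vnonempty X /\ B X /\ vsub X (rall r s lab al).
Proof. intros H. destruct hxi as [hES _]. apply hES in H.
  destruct H as [(H1 & H2 & H3 & [H4 H5] & _) H6]. auto. Qed.

Variables (b beta : list A).
Hypothesis hbeta : beta <> [].
Hypothesis hult : set_ultrafilter (Bw r s lab B (b ++ beta)) (fun X => B X /\ xi (Some (b ++ beta, X, b ++ beta))).

Lemma Y0ex : exists Y0, B Y0 /\ xi (Some (b ++ beta, Y0, b ++ beta)).
Proof. destruct hult as [[_ [H _]] _]. exact H. Qed.

Lemma Lstar_a : in_Lstar r s lab (b ++ beta).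
Proof. destruct Y0ex as (Y0 & _ & H). apply inES_some in H. tauto. Qed.

Lemma Lplus_beta : in_Lplus r s lab beta.
Proof. destruct (Lstar_app _ _ _ r s lab _ _ Lstar_a) as [_ [H|H]]; [congruence|exact H]. Qed.

Lemma Lstar_b : in_Lstar r s lab b.
Proof. apply (Lstar_app _ _ _ r s lab _ _ Lstar_a). Qed.

Lemma F1 X Y : B X -> vsub X (rall r s lab b) -> B Y -> xi (Some (b ++ beta, Y, b ++ beta)) ->
  vsub Y (rng r s lab X beta) -> xi (Some (b, X, b)).
Proof. intros HX HXs HY Hxi Hsub. destruct hxi as [_ [_ [hup _]]].
  pose proof (inES_some _ _ _ Hxi) as (_ & _ & [v Hv] & _).
  apply hup with (Some (b ++ beta, Y, b ++ beta)); auto.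
  - repeat split; auto using Lstar_b.
    apply (rng_src _ _ _ r s lab X beta v). auto.
  - apply le_of_sub; auto. exists v; auto. Qed.

Lemma F2 X : xi (Some (b, X, b)) -> xi (Some (b ++ beta, rng r s lab X beta, b ++ beta)).
Proof. intros HX. destruct hxi as [_ [_ [hup [hNone hlb]]]].
  destruct Y0ex as (Y0 & HY0 & HxY0).
  destruct (hlb _ _ HxY0 HX) as ([[[g C] g']|] & Ht & L1 & L2); [|contradiction].
  pose proof (inES_some _ _ _ Ht) as (<- & _ & [v Hv] & _).
  pose proof (inES_some _ _ _ HX) as (_ & _ & _ & HBX & HXs).
  destruct (shape _ _ _ r s lab _ _ _ _ L1) as (d & Eg & _).
  destruct (shape _ _ _ r s lab _ _ _ _ L2) as (d' & Eg' & HC).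
  assert (d' = beta ++ d) as ->.
  { rewrite Eg' in Eg. rewrite <- app_assoc in Eg. eapply app_inv_head; eauto. }
  assert (HC' : vsub C (rng r s lab (rng r s lab X beta) d)).
  { intros u Hu. apply rng_app. auto. }
  apply hup with (Some (g, C, g)); auto.
  - repeat split; auto using Lstar_a.
    + apply (rng_src _ _ _ r s lab _ d v). auto.
    + apply hacc; auto. apply (Lstar_app _ _ _ r s lab _ _ Lstar_a).
    + intros u Hu. unfold rall. apply rng_app. apply (rng_mono _ _ _ r s lab X); auto.
    + apply hacc; auto. apply (Lstar_app _ _ _ r s lab _ _ Lstar_a).
    + intros u Hu. unfold rall. apply rng_app. apply (rng_mono _ _ _ r s lab X); auto.
  - rewrite Eg. apply le_of_sub; auto. exists v; auto. Qed.

Definition Fm := fun X => B X /\ xi (Some (b, X, b)).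
Lemma hne_pos : b <> [] -> exists X, Fm X.
Proof. intros Hb. destruct Y0ex as (Y0 & HY0 & HxY0).
  pose proof (inES_some _ _ _ HxY0) as (_ & _ & _ & _ & HYs).
  assert (HBb : B (rall r s lab b)).
  { apply hacc. destruct Lstar_b as [H|H]; [congruence|exact H]. }
  exists (rall r s lab b). split; auto. apply F1 with Y0; auto.
  - intros v H; exact H.
  - intros v Hv. apply HYs in Hv. unfold rall in Hv. apply rng_app in Hv. exact Hv. Qed.

Hypothesis hneFm : exists X, Fm X.

Lemma Fn_filter : set_filter (Bw r s lab B (b ++ beta)) (fun X => B X /\ xi (Some (b ++ beta, X, b ++ beta))).
Proof. apply hult. Qed.

Lemma Fm_filter : set_filter (fun X => B X /\ vsub X (rall r s lab b)) Fm.
Proof. destruct hxi as [_ [_ [hup _]]]. split; [|split; [|split; [|split]]].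
  - intros X [_ H]. apply inES_some in H; tauto.
  - exact hneFm.
  - intros X Y [_ HX] [HY HYs] Hs. split; auto. apply hup with (Some (b, X, b)); auto.
    + pose proof (inES_some _ _ _ HX) as (_ & Hl & [v Hv] & _).
      repeat split; auto. exists v; auto.
    + pose proof (inES_some _ _ _ HX) as (_ & Hl & Hn & _). apply le_of_sub0; auto.
  - intros X [_ H]. apply inES_some in H; tauto.
  - intros X1 X2 [H1 Hx1] [H2 Hx2].
    destruct Fn_filter as [_ [_ [_ [_ Flb]]]].
    assert (Hb : forall X, B X -> xi (Some (b, X, b)) ->
       B (rng r s lab X beta) /\ xi (Some (b ++ beta, rng r s lab X beta, b ++ beta))).
    { intros X HB HX. split; [|apply F2; auto]. apply hacc; auto. right; apply Lplus_beta. }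
    destruct (Flb _ _ (Hb X1 H1 Hx1) (Hb X2 H2 Hx2)) as (Z & [HZ HxZ] & S1 & S2).
    assert (HB12 : B (fun v => X1 v /\ X2 v)) by (apply hacc; auto).
    exists (fun v => X1 v /\ X2 v). split; [split|split].
    + exact HB12.
    + apply F1 with Z; auto.
      * pose proof (inES_some _ _ _ Hx1) as (_ & _ & _ & _ & Hs). intros v [Hv _]. auto.
      * intros v Hv. apply (hwlr X1 X2 beta H1 H2 Lplus_beta). auto.
    + intros v [Hv _]; auto.
    + intros v [_ Hv]; auto. Qed.

Lemma Fm_ultra : set_ultrafilter (fun X => B X /\ vsub X (rall r s lab b)) Fm.
Proof. apply ultra_D2; [apply Fm_filter|]. intros A0 [HA0 HA0s] HnF.
  assert (HBa : B (rall r s lab (b ++ beta))).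
  { apply hacc. destruct Lstar_a as [H|H]; auto. destruct b; simpl in H; congruence. }
  set (A' := fun v => rng r s lab A0 beta v /\ rall r s lab (b ++ beta) v).
  assert (HA' : Bw r s lab B (b ++ beta) A').
  { split. apply hacc; auto. apply hacc; auto. right; apply Lplus_beta. intros v [_ H]; auto. }
  assert (HnA' : ~ (B A' /\ xi (Some (b ++ beta, A', b ++ beta)))).
  { intros [HB Hx]. apply HnF. split; auto. apply F1 with A'; auto. intros v [H _]; auto. }
  destruct (ultra_D1 _ _ hult) with A' as (D & [HD HxD] & Hdis); auto.
  { intros X Y [H1 H2] [H3 H4]. split. apply hacc; auto. intros v [H _]; auto. }
  destruct hneFm as (X0 & HX0 & HxX0).
  pose proof (inES_some _ _ _ HxX0) as (_ & _ & _ & _ & HX0s).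
  pose proof (inES_some _ _ _ HxD) as (_ & _ & _ & _ & HDs).
  destruct Fn_filter as [_ [_ [_ [_ Flb]]]].
  assert (HB0 : B (rng r s lab X0 beta)). { apply hacc; auto. right; apply Lplus_beta. }
  destruct (Flb (rng r s lab X0 beta) D) as (Z & [HZ HxZ] & S1 & S2); [split; auto; apply F2; auto| split; auto|].
  exists (fun v => X0 v /\ ~ A0 v). split.
  - split. apply hcompl; auto. apply F1 with Z; auto; try (apply hcompl; auto).
    + intros v [H _]; auto.
    + intros v Hv. pose proof (S1 v Hv) as Hr. destruct beta as [|b1 bs]; [congruence|].
      destruct Hr as (e & l & Hc & Hm & HX & Hl). exists e, l. repeat split; auto.
      intros HA. apply (Hdis v).
      * split. exists e, l. auto. auto.
      * auto.
  - intros v H1 [_ H2]. auto. Qed.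

End Q.

Lemma firstn_app_len {T} (l1 l2 : list T) k : length l1 = k -> firstn k (l1 ++ l2) = l1.
Proof. intros <-. apply firstn_len_app. Qed.

Theorem mainTheorem13
  (V Ed A : Type) (r s : Ed -> V) (lab : Ed -> A) (B : vset V -> Prop)
  (hV : countable V) (hEd : countable Ed) (hVne : inhabited V) (hEne : inhabited Ed)
  (hlab : forall a : A, exists e, lab e = a)
  (hacc : accommodating r s lab B)
  (hwlr : weakly_left_resolving r s lab B)
  (hcompl : closed_rel_compl B)
  (xi : Selt V A -> Prop)
  (hxi : ES_filter r s lab B xi)
  (w : lword A) (hw : filter_word xi w) (hwL : in_Lle_inf r s lab w)
  (n : nat) (hn0 : 0 < n) (hn : le_len n w)
  (hult : set_ultrafilter (Bw r s lab B (wpre w n)) (xi_n B xi w n)) :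
  (forall m, 0 < m -> m < n ->
     set_ultrafilter (Bw r s lab B (wpre w m)) (xi_n B xi w m)) /\
  ((exists X, xi_n B xi w 0 X) -> set_ultrafilter B (xi_n B xi w 0)).
Proof.
  assert (Hw : length (wpre w n) = n /\ forall m, m <= n -> wpre w m = firstn m (wpre w n)).
  { destruct w as [al|al]; simpl in *.
    - split. rewrite length_firstn; lia. intros m Hm. rewrite firstn_firstn. f_equal; lia.
    - split. rewrite length_map, length_seq; auto. intros m Hm.
      replace n with (m + (n - m)) by lia. rewrite seq_app, map_app.
      symmetry. apply firstn_app_len. rewrite length_map, length_seq. reflexivity. }
  destruct Hw as [Hlen Hpre].
  unfold xi_n in *.
  set (a := wpre w n) in *.
  assert (core : forall m, m < n ->
    (exists X, B X /\ xi (Some (firstn m a, X, firstn m a))) ->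
    set_ultrafilter (fun X => B X /\ vsub X (rall r s lab (firstn m a)))
                    (fun X => B X /\ xi (Some (firstn m a, X, firstn m a)))).
  { intros m Hm Hne.
    assert (Hult' : set_ultrafilter (Bw r s lab B (firstn m a ++ skipn m a))
       (fun X => B X /\ xi (Some (firstn m a ++ skipn m a, X, firstn m a ++ skipn m a))))
      by (rewrite firstn_skipn; exact hult).
    pose proof Fm_ultra as K. unfold Fm in K. eapply K; eauto.
    intros H. apply (f_equal (@length A)) in H. rewrite length_skipn in H. simpl in H. lia. }
  split.
  - intros m Hm0 Hmn. rewrite (Hpre m) by lia. apply core; auto.
    assert (Hult' : set_ultrafilter (Bw r s lab B (firstn m a ++ skipn m a))
       (fun X => B X /\ xi (Some (firstn m a ++ skipn m a, X, firstn m a ++ skipn m a))))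
      by (rewrite firstn_skipn; exact hult).
    pose proof hne_pos as K. unfold Fm in K. eapply K; eauto.
    intros H. apply (f_equal (@length A)) in H. rewrite length_firstn in H. simpl in H. lia.
  - intros Hex. rewrite (Hpre 0) in Hex |- * by lia.
    apply ultra_ext with (fun X => B X /\ vsub X (rall r s lab (firstn 0 a))).
    + intros X; split; [tauto|]. intros HX; split; auto. intros v _; exact I.
    + apply core; auto.
Qed.
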